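(* Let $n\ge 2$, $F\in GL^+(n)$, $\mu>0$, $\mu_c\ge 0$, and consider $\widetilde W_{\mu,\mu_c}(\cdot;F):SO(n)\to\mathbb R$. Then: (i) A rotation $R\in SO(n)$ is a critical point of $\widetilde W_{\mu,\mu_c}(\cdot;F)$ if and only if $$(\mu-\mu_c)\big(FR^TFR^T-RF^TRF^T\big)=2\mu\,(FR^T-RF^T).$$ (ii) Let $X\in\mathcal M_{n\times n}(\mathbb R)$ with $\det X>0$ and put $R=X^TF^{-T}$. Then $R\in SO(n)$ and $R$ is a critical point of $\widetilde W_{\mu,\mu_c}(\cdot;F)$ if and only if $$(\mu-\mu_c)\big(X^2-(X^T)^2\big)=2\mu(X-X^T)\quad\text{and}\quad XX^T=FF^T .$$ (iii) Equivalently, with $X$ and $R$ as in (ii), $R\in SO(n)$ is a critical point if and only if $$(X-X^T)\big((\mu-\mu_c)(X+X^T)-2\mu\,\mathbb I_n\big)=(\mu-\mu_c)[X,X^T]\quad\text{and}\quad XX^T=FF^T,$$ where $[U,V]=UV-VU$. (Every $R\in SO(n)$ arises in this way, with $X=FR^T$.)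
   Context: For a square matrix $Y$, $\mathrm{sym}(Y)=\tfrac12(Y+Y^T)$, $\mathrm{skew}(Y)=\tfrac12(Y-Y^T)$, and $\|Y\|^2=\mathrm{tr}(Y^TY)$ is the Frobenius norm. $GL^+(n)$ denotes real $n\times n$ matrices with positive determinant. For $F\in GL^+(n)$, $\mu>0$, $\mu_c\ge0$, the generalized free energy is $\widetilde W_{\mu,\mu_c}(R;F)=\mu\|\mathrm{sym}(R^TF-\mathbb I_n)\|^2+\mu_c\|\mathrm{skew}(R^TF-\mathbb I_n)\|^2$ for $R\in SO(n)$. A critical point means a critical point of this function restricted to the smooth submanifold $SO(n)\subset\mathcal M_{n\times n}(\mathbb R)$. *)

(* Defs.v *)
From HB Require Import structures.
From mathcomp Require Import all_boot all_order all_algebra.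
Set Implicit Arguments. Unset Strict Implicit. Unset Printing Implicit Defensive.
Import Order.TTheory GRing.Theory Num.Theory.
Local Open Scope ring_scope.

Section Defs.
Variables (K : realFieldType) (n : nat).
Notation M := 'M[K]_n.

Definition msym (Y : M) : M := 2^-1 *: (Y + Y^T).
Definition mskew (Y : M) : M := 2^-1 *: (Y - Y^T).
Definition frob2 (Y : M) : K := \tr (Y^T *m Y).

Definition GLplus (F : M) : Prop := 0 < \det F.
Definition SOn (R : M) : Prop := R^T *m R = 1%:M /\ \det R = 1.

Definition Wt (mu muc : K) (F R : M) : K :=
  mu * frob2 (msym (R^T *m F - 1%:M)) + muc * frob2 (mskew (R^T *m F - 1%:M)).

Definition has_deriv0 (f : K -> K) (l : K) : Prop :=
  forall eps : K, 0 < eps -> exists2 delta : K, 0 < delta &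
    forall t : K, 0 < `|t| < delta -> `|(f t - f 0) / t - l| < eps.

(* tangent space of SO(n) at R, as a regular level set of X |-> X^T X *)
Definition tangentSO (R H : M) : Prop := H^T *m R + R^T *m H = 0.

Definition critical_SO (f : M -> K) (R : M) : Prop :=
  SOn R /\ forall H : M, tangentSO R H -> has_deriv0 (fun t => f (R + t *: H)) 0.

Definition commutator (U V : M) : M := U *m V - V *m U.
End Defs.

(* Main.v *)
Require Import Defs.
From HB Require Import structures.
From mathcomp Require Import all_boot all_order all_algebra.
From mathcomp Require Import ring lra.
Import Order.TTheory GRing.Theory Num.Theory.
Local Open Scope ring_scope.

Lemma deriv_quad (K : realFieldType) (f : K -> K) (b c : K) :
  (forall t, f t - f 0 = t * (b + t * c)) -> (has_deriv0 f 0 <-> b = 0).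
Proof.
move=> hf; have hq : forall t, t != 0 -> (f t - f 0) / t - 0 = b + t * c.
  by move=> t ht; rewrite hf subr0 mulrC mulKf.
split.
- move=> hd; apply/eqP/negP => /negP hb.
  have hb0 : 0 < `|b| by rewrite normr_gt0.
  have [d hd0 hdd] := hd (`|b| / 2) ltac:(lra).
  have h1 : 0 < `|d/2| < d by rewrite ger0_norm; lra.
  have h2 : 0 < `|- (d/2)| < d by rewrite normrN ger0_norm; lra.
  have e1 := hdd _ h1; have e2 := hdd _ h2.
  rewrite hq in e1; last by apply/eqP => /eqP; lra.
  rewrite hq in e2; last by apply/eqP => /eqP; lra.
  have := ler_normD (b + d / 2 * c) (b + - (d / 2) * c).
  have -> : b + d / 2 * c + (b + - (d / 2) * c) = 2 * b by ring.
  rewrite normrM ger0_norm; last by lra.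
  lra.
- move=> hb0 eps he.
  set d := eps / (`|c| + 1).
  have hc := normr_ge0 c.
  have hdd : d * (`|c| + 1) = eps by rewrite /d mulfVK //; apply/eqP => /eqP; lra.
  have hd0 : 0 < d by rewrite /d divr_gt0 //; lra.
  exists d => // t /andP [ht1 ht2].
  rewrite hq; last by rewrite -normr_gt0.
  rewrite hb0 add0r normrM.
  have := normr_ge0 t. nra.
Qed.

Section S.
Variables (K : realFieldType) (n : nat).
Notation M := 'M[K]_n.

Lemma trD (A B : M) : (A + B)^T = A^T + B^T.
Proof. by apply/matrixP => i j; rewrite !mxE. Qed.
Lemma trB (A B : M) : (A - B)^T = A^T - B^T.
Proof. by apply/matrixP => i j; rewrite !mxE. Qed.
Lemma trZ (a : K) (A : M) : (a *: A)^T = a *: A^T.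
Proof. by apply/matrixP => i j; rewrite !mxE. Qed.

Lemma mxtraceN' (A : M) : \tr (- A) = - \tr A.
Proof. by rewrite /mxtrace -sumrN; apply eq_bigr => i _; rewrite mxE. Qed.
Lemma mxtraceB (A B : M) : \tr (A - B) = \tr A - \tr B.
Proof. by rewrite mxtraceD mxtraceN'. Qed.

Lemma trTT (A B : M) : \tr (A^T *m B^T) = \tr (A *m B).
Proof. by rewrite -trmx_mul mxtrace_tr mxtrace_mulC. Qed.

Lemma trT1 (A B : M) : \tr (A^T *m B) = \tr (B^T *m A).
Proof. by rewrite -mxtrace_tr trmx_mul trmxK. Qed.

Lemma trT2 (A B : M) : \tr (A *m B^T) = \tr (A^T *m B).
Proof. by rewrite mxtrace_mulC trT1. Qed.

Lemma frob2_add (P Q : M) t :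
  frob2 (P + t *: Q) = frob2 P + t * (2 * \tr (P^T *m Q)) + t * (t * frob2 Q).
Proof.
rewrite /frob2 trD trZ /= mulmxDl !mulmxDr -!scalemxAl -!scalemxAr.
rewrite !mxtraceD !mxtraceZ (trT1 Q P); ring.
Qed.

Lemma msym_add (P Q : M) t : msym (P + t *: Q) = msym P + t *: msym Q.
Proof.
rewrite /msym trD trZ /= scalerA mulrC -scalerA -scalerDr; congr (_ *: _).
by rewrite scalerDr !addrA (addrAC P).
Qed.

Lemma mskew_add (P Q : M) t : mskew (P + t *: Q) = mskew P + t *: mskew Q.
Proof.
rewrite /mskew trD trZ /= scalerA mulrC -scalerA -scalerDr; congr (_ *: _).
rewrite scalerBr opprD !addrA; congr (_ - _); rewrite -!addrA; congr (_ + _); by rewrite addrC.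
Qed.

Lemma tr_sym (P Q : M) :
  \tr ((msym P)^T *m msym Q) = 2^-1 * (\tr (P^T *m Q) + \tr (P *m Q)).
Proof.
rewrite /msym trZ /= trD /= trmxK -scalemxAl -scalemxAr !mxtraceZ.
rewrite mulmxDl !mulmxDr !mxtraceD trTT trT2; field; by [].
Qed.

Lemma tr_skew (P Q : M) :
  \tr ((mskew P)^T *m mskew Q) = 2^-1 * (\tr (P^T *m Q) - \tr (P *m Q)).
Proof.
rewrite /mskew trZ /= trB /= trmxK -scalemxAl -scalemxAr !mxtraceZ.
rewrite mulmxBl !mulmxBr !mxtraceB trTT trT2; field; by [].
Qed.
Lemma Y_add (F R H : M) t :
  (R + t *: H)^T *m F - 1%:M = (R^T *m F - 1%:M) + t *: (H^T *m F).
Proof. by rewrite trD trZ mulmxDl -scalemxAl addrAC. Qed.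

Definition bcoef (mu muc : K) (F R H : M) : K :=
  let Y := R^T *m F - 1%:M in let D := H^T *m F in
  mu * (\tr (Y^T *m D) + \tr (Y *m D)) + muc * (\tr (Y^T *m D) - \tr (Y *m D)).

Lemma Wt_expand mu muc (F R H : M) t :
  Wt mu muc F (R + t *: H) = Wt mu muc F R + t * (bcoef mu muc F R H +
     t * (mu * frob2 (msym (H^T *m F)) + muc * frob2 (mskew (H^T *m F)))).
Proof.
rewrite /Wt Y_add msym_add mskew_add !frob2_add tr_sym tr_skew /bcoef.
field; by [].
Qed.

Lemma trL (A B C : M) : \tr (A *m (B *m C)) = \tr (C *m A *m B).
Proof. by rewrite mulmxA mxtrace_mulC mulmxA. Qed.

Lemma bcoef_B mu muc (F R B : M) : R *m R^T = 1%:M -> B^T = - B ->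
  bcoef mu muc F R (B *m R) =
  - \tr (((mu + muc) *: (F *m F^T - F *m R^T)
         + (mu - muc) *: (F *m R^T *m F *m R^T - F *m R^T)) *m B).
Proof.
move=> hR hB.
rewrite /bcoef trmx_mul hB trB trmx_mul trmxK trmx1.
have t1 : \tr (F^T *m R *m (R^T *m - B *m F)) = - \tr (F *m F^T *m B).
  rewrite !(mulmxN, mulNmx) mxtraceN' !mulmxA -(mulmxA F^T R) hR mulmx1.
  by rewrite mxtrace_mulC !mulmxA.
have t2 : \tr (R^T *m - B *m F) = - \tr (F *m R^T *m B).
  by rewrite !(mulmxN, mulNmx) mxtraceN' mxtrace_mulC mulmxA.
have t3 : \tr (R^T *m F *m (R^T *m - B *m F)) = - \tr (F *m R^T *m F *m R^T *m B).
  by rewrite !(mulmxN, mulNmx) mxtraceN' !mulmxA mxtrace_mulC !mulmxA.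
rewrite !mulmxBl !mul1mx !mxtraceB !mulmxDl -!scalemxAl !mxtraceD !mxtraceZ !mulmxBl !mxtraceB t1 t2 t3; ring.
Qed.
Lemma tr_delta (N : M) a b : \tr (N *m delta_mx a b) = N b a.
Proof.
rewrite /mxtrace (bigD1 b) //= big1 ?addr0; last first.
  move=> k hk; rewrite mxE big1 // => l _; rewrite mxE (negbTE hk) andbF mulr0 //.
rewrite mxE (bigD1 a) //= big1 ?addr0; last first.
  move=> l hl; rewrite mxE (negbTE hl) mulr0 //.
by rewrite /delta_mx mxE !eqxx mulr1.
Qed.

Lemma skew_tr_iff (N : M) :
  (forall B : M, B^T = - B -> \tr (N *m B) = 0) <-> N^T = N.
Proof.
split.
- move=> h; apply/matrixP => i j; rewrite mxE.
  have := h (delta_mx i j - delta_mx j i).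
  rewrite trB !trmx_delta opprB => /(_ erefl).
  rewrite mulmxBr mxtraceB !tr_delta => /eqP; rewrite subr_eq0 => /eqP //.
- move=> hN B hB.
  have e : \tr (N *m B) = - \tr (N *m B).
    by rewrite -{1}mxtrace_tr trmx_mul hB hN mulNmx mxtraceN' mxtrace_mulC.
  lra.
Qed.
Definition Nmat (mu muc : K) (F R : M) : M :=
  (mu + muc) *: (F *m F^T - F *m R^T)
         + (mu - muc) *: (F *m R^T *m F *m R^T - F *m R^T).

Lemma Nsym_iff mu muc (F R : M) :
  (Nmat mu muc F R)^T = Nmat mu muc F R <->
  (mu - muc) *: (F *m R^T *m F *m R^T - R *m F^T *m R *m F^T)
        = (2 * mu) *: (F *m R^T - R *m F^T).
Proof.
have e : Nmat mu muc F R - (Nmat mu muc F R)^T =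
   (mu - muc) *: (F *m R^T *m F *m R^T - R *m F^T *m R *m F^T)
        - (2 * mu) *: (F *m R^T - R *m F^T).
  rewrite /Nmat !trD !trZ !trB !trmx_mul !trmxK !mulmxA.
  move: (F *m F^T) (F *m R^T) (R *m F^T) (F *m R^T *m F *m R^T) (R *m F^T *m R *m F^T).
  move=> A1 A2 A3 A4 A5; apply/matrixP => i j; rewrite !mxE; ring.
split => h.
- by apply/eqP; rewrite -subr_eq0 -e h subrr.
- by apply/eqP; rewrite eq_sym -subr_eq0 e h subrr.
Qed.
Lemma part_i mu muc (F R : M) : SOn R ->
  (critical_SO (Wt mu muc F) R <->
   (mu - muc) *: (F *m R^T *m F *m R^T - R *m F^T *m R *m F^T)
        = (2 * mu) *: (F *m R^T - R *m F^T)).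
Proof.
move=> hSO; have [hRR _] := hSO; have hR := mulmx1C hRR.
have hq : forall H, has_deriv0 (fun t => Wt mu muc F (R + t *: H)) 0
                    <-> bcoef mu muc F R H = 0.
  move=> H; apply: (@deriv_quad K _ _ (mu * frob2 (msym (H^T *m F)) + muc * frob2 (mskew (H^T *m F)))) => t /=.
  rewrite (Wt_expand _ _ F R H t) (Wt_expand _ _ F R H 0); ring.
apply: (iff_trans _ (Nsym_iff mu muc F R)); apply: (iff_trans _ (skew_tr_iff _)).
split.
- move=> [_ hc] B hB.
  have hT : tangentSO R (B *m R).
    by rewrite /tangentSO trmx_mul hB mulmxN mulNmx -mulmxA addNr.
  have := (hq _).1 (hc _ hT); rewrite bcoef_B // /Nmat => /eqP.
  by rewrite oppr_eq0 => /eqP.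
- move=> h; split => // H hT.
  apply/(hq H).
  have hB : (H *m R^T)^T = - (H *m R^T).
    rewrite trmx_mul trmxK.
    have e : H^T = - (R^T *m H) *m R^T.
      rewrite -[H^T]mulmx1 -hR mulmxA.
      move: hT; rewrite /tangentSO => /eqP; rewrite addr_eq0 => /eqP ->. done.
    by rewrite e mulNmx mulmxN !mulmxA hR mul1mx.
  have -> : H = (H *m R^T) *m R by rewrite -mulmxA hRR mulmx1.
  by rewrite bcoef_B // (h _ hB) oppr0.
Qed.
Lemma iii_equiv mu muc (X : M) :
  ((X - X^T) *m ((mu - muc) *: (X + X^T) - (2 * mu) *: 1%:M)
         = (mu - muc) *: commutator X X^T) <->
  ((mu - muc) *: (X *m X - X^T *m X^T) = (2 * mu) *: (X - X^T)).
Proof.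
have e : (X - X^T) *m ((mu - muc) *: (X + X^T) - (2 * mu) *: 1%:M)
         - (mu - muc) *: commutator X X^T =
         (mu - muc) *: (X *m X - X^T *m X^T) - (2 * mu) *: (X - X^T).
  rewrite /commutator; move: (X^T) => Y.
  rewrite mulmxBr -!scalemxAr mulmxDr !mulmxBl !mulmx1.
  move: (X *m X) (X *m Y) (Y *m X) (Y *m Y) => A1 A2 A3 A4.
  apply/matrixP => i j; rewrite !mxE; ring.
split => h.
- by apply/eqP; rewrite -subr_eq0 -e h subrr.
- by apply/eqP; rewrite -subr_eq0 e h subrr.
Qed.

Lemma part_ii mu muc (F X : M) : 0 < \det F -> 0 < \det X ->
  let R := X^T *m (invmx F)^T in
  (critical_SO (Wt mu muc F) R <->
      ((mu - muc) *: (X *m X - X^T *m X^T) = (2 * mu) *: (X - X^T)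
       /\ X *m X^T = F *m F^T)).
Proof.
move=> hF hX R.
have hFu : F \in unitmx by rewrite unitmxE unitfE gt_eqF.
have FRt : F *m R^T = X by rewrite /R trmx_mul !trmxK mulmxA mulmxV // mul1mx.
have RFt : R *m F^T = X^T.
  by rewrite /R -mulmxA -trmx_mul mulmxV // trmx1 mulmx1.
have hRdef : R = X^T *m (invmx F)^T by [].
clearbody R.
have e2 : F *m R^T *m F *m R^T = X *m X by rewrite -mulmxA !FRt.
have e3 : R *m F^T *m R *m F^T = X^T *m X^T by rewrite -mulmxA !RFt.
have hSO : SOn R <-> X *m X^T = F *m F^T.
  split.
  - move=> [hRR _]; rewrite -FRt trmx_mul trmxK mulmxA -(mulmxA F) hRR mulmx1 //.
  - move=> hXX.
    have hRR : R^T *m R = 1%:M.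
      rewrite hRdef trmx_mul !trmxK mulmxA -(mulmxA _ X) hXX mulmxA mulVmx // mul1mx.
      by rewrite -trmx_mul mulVmx // trmx1.
    split => //.
    have d1 : \det R ^+ 2 = 1 by rewrite expr2 -{1}det_tr -det_mulmx hRR det1.
    have d2 : 0 < \det R.
      rewrite hRdef det_mulmx !det_tr det_inv; apply: mulr_gt0 => //; by rewrite invr_gt0.
    move: d1; rewrite expr2 => d1; nra.
split.
- move=> hc; have hS := hc.1; have := (part_i mu muc F R hS).1 hc.
  rewrite e2 e3 FRt RFt => h; split => //; exact: hSO.1.
- move=> [h1 h2]; have hS := hSO.2 h2; apply/(part_i mu muc F R hS).
  by rewrite e2 e3 FRt RFt.
Qed.
End S.

Theorem mainTheorem1 (K : realFieldType) (n : nat) (F : 'M[K]_n) (mu muc : K) :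
  (2 <= n)%N -> GLplus F -> 0 < mu -> 0 <= muc ->
  (* (i) *)
  (forall R : 'M[K]_n, SOn R ->
     (critical_SO (Wt mu muc F) R <->
      (mu - muc) *: (F *m R^T *m F *m R^T - R *m F^T *m R *m F^T)
        = (2 * mu) *: (F *m R^T - R *m F^T)))
  /\
  (* (ii) *)
  (forall X : 'M[K]_n, 0 < \det X ->
     let R := X^T *m (invmx F)^T in
     (critical_SO (Wt mu muc F) R <->
      ((mu - muc) *: (X *m X - X^T *m X^T) = (2 * mu) *: (X - X^T)
       /\ X *m X^T = F *m F^T)))
  /\
  (* (iii) *)
  (forall X : 'M[K]_n, 0 < \det X ->
     let R := X^T *m (invmx F)^T in
     (critical_SO (Wt mu muc F) R <->
      ((X - X^T) *m ((mu - muc) *: (X + X^T) - (2 * mu) *: 1%:M)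
         = (mu - muc) *: commutator X X^T
       /\ X *m X^T = F *m F^T)))
  /\
  (* every rotation arises this way, with X = F R^T *)
  (forall R : 'M[K]_n, SOn R ->
     0 < \det (F *m R^T) /\ R = (F *m R^T)^T *m (invmx F)^T).
Proof.
move=> _ hF _ _.
have hFu : F \in unitmx by rewrite unitmxE unitfE gt_eqF.
split; first by move=> R hR; exact: part_i.
split; first by move=> X hX; exact: part_ii.
split.
- move=> X hX; have h0 := @part_ii K n mu muc F X hF hX; cbv zeta in h0 |- *.
  apply: (iff_trans h0).
  split => [[h1 h2]|[h1 h2]]; split => //; by apply/iii_equiv.
- move=> R [_ hd]; split.
    by rewrite det_mulmx det_tr hd mulr1.
  by rewrite trmx_mul trmxK -mulmxA -trmx_mul mulVmx // trmx1 mulmx1.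
Qed.
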